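(* For every $d\ge 2$ there is a number $M_d>0$ such that the following holds: if $H_1,\dots,H_d$ are mutually orthogonal affine hyperplanes in $\mathbb{R}^d$, then the set $\Gamma=\{\gamma(t):t\ge M_d\}$ intersects some $H_i$ in at most one point.
   Context: $\gamma:\mathbb{R}\to\mathbb{R}^d$ denotes the moment curve $\gamma(t)=(t,t^2,\dots,t^d)$. Affine hyperplanes are mutually orthogonal if their normal vectors are pairwise orthogonal. *)

(* Defs.v *)
From HB Require Import structures.
From mathcomp Require Import all_boot all_order all_algebra.
From mathcomp Require Import reals.
Set Implicit Arguments. Unset Strict Implicit. Unset Printing Implicit Defensive.
Import Order.TTheory GRing.Theory Num.Theory.
Local Open Scope ring_scope.

Definition dotv (R : realType) (d : nat) (u v : 'rV[R]_d) : R :=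
  \sum_(k < d) u 0 k * v 0 k.

(* The moment curve gamma(t) = (t, t^2, ..., t^d). *)
Definition moment_curve (R : realType) (d : nat) (t : R) : 'rV[R]_d :=
  \row_(i < d) t ^+ i.+1.

(* The affine hyperplane {x | <n, x> = b}; it is a genuine hyperplane when n != 0. *)
Definition on_hyperplane (R : realType) (d : nat) (n : 'rV[R]_d) (b : R)
  (x : 'rV[R]_d) : Prop := dotv n x = b.

(* Main.v *)
Require Import Defs.
From HB Require Import structures.
From mathcomp Require Import all_boot all_order all_algebra.
From mathcomp Require Import reals.
From mathcomp Require Import ring lra.
Import Order.TTheory GRing.Theory Num.Theory.
Local Open Scope ring_scope.

Lemma pow_gap (R : realFieldType) (M s t : R) (m j : nat) :
  1 <= M -> M <= s -> s <= t ->
  M * (t ^+ m - s ^+ m) <= t ^+ (m + j).+1 - s ^+ (m + j).+1.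
Proof.
move=> M1 Ms st.
have s0 : 0 <= s by lra.
have key : forall p, 0 <= t ^+ p - s ^+ p.
  move=> p; rewrite subr_ge0; apply: lerXn2r; rewrite ?nnegrE //; lra.
have step : forall p, t ^+ p.+1 - s ^+ p.+1 = t * (t ^+ p - s ^+ p) + s ^+ p * (t - s).
  by move=> p; rewrite !exprS; ring.
elim: j => [|j IH].
  rewrite addn0 step; have := key m; have := exprn_ge0 m s0; nra.
rewrite addnS step; have := key (m + j).+1; have := exprn_ge0 (m + j).+1 s0; nra.
Qed.

Lemma core (R : realFieldType) (d' : nat) (c : 'I_d'.+1 -> R) (s t : R) :
  c ord_max != 0 -> (forall k, `|c k| <= d'.+1%:R * `|c ord_max|) ->
  d'.+1%:R * d'.+1%:R + 1 <= s -> s < t ->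
  \sum_k c k * s ^+ k.+1 != \sum_k c k * t ^+ k.+1.
Proof.
rewrite -natr1; set N := d'%:R.
have N0 : 0 <= N by rewrite ler0n.
move=> cn cb Ms st; apply/negP => /eqP E.
set D := t ^+ d'.+1 - s ^+ d'.+1.
have s0 : 0 <= s by nra.
have D0 : 0 < D by rewrite subr_gt0 ltrXn2r //; lra.
have E0 : \sum_k c k * (t ^+ k.+1 - s ^+ k.+1) = 0.
  rewrite (eq_bigr (fun k => c k * t ^+ k.+1 - c k * s ^+ k.+1)); last first.
    by move=> k _; rewrite mulrBr.
  by rewrite sumrB E subrr.
rewrite big_ord_recr /= in E0.
set S := \sum_(i < d') _ in E0.
have cD : `|c ord_max| * D = `|S|.
  have -> : S = - (c ord_max * D) by rewrite /D; lra.
  by rewrite normrN normrM (gtr0_norm D0).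
have bound : (N + 1) * (N + 1) + 1 <= s -> ((N + 1) * (N + 1) + 1) * `|S| <= N * ((N + 1) * `|c ord_max| * D).
  move=> _.
  have h : `|S| <= \sum_(i < d') `|c (widen_ord (leqnSn d') i) * (t ^+ i.+1 - s ^+ i.+1)|.
    by apply: ler_norm_sum.
  set M := (N + 1) * (N + 1) + 1.
  have M0 : 0 <= M by rewrite /M; nra.
  apply: le_trans (ler_wpM2l M0 h) _.
  rewrite mulr_sumr.
  have -> : N * ((N + 1) * `|c ord_max| * D) = \sum_(i < d') ((N + 1) * `|c ord_max| * D).
    by rewrite sumr_const card_ord mulr_natl.
  apply: ler_sum => k _.
  rewrite normrM (ger0_norm (x := _ - _)); last first.
    rewrite subr_ge0; apply: lerXn2r; rewrite ?nnegrE //; lra.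
  have hk : (k.+1 + (d' - k.+1))%N = d' by rewrite subnKC.
  have := @pow_gap _ M s t k.+1 (d' - k.+1).
  rewrite hk -/D => /(_ _ Ms (ltW st)).
  have M1 : 1 <= M by rewrite /M; nra.
  move=> /(_ M1) g.
  have := cb (widen_ord (leqnSn d') k); move=> ck.
  have e0 : 0 <= t ^+ k.+1 - s ^+ k.+1.
    rewrite subr_ge0; apply: lerXn2r; rewrite ?nnegrE //; lra.
  have := normr_ge0 (c (widen_ord (leqnSn d') k)).
  have := normr_ge0 (c ord_max).
  nra.
have := bound Ms; rewrite -cD.
have cp : 0 < `|c ord_max| by rewrite normr_gt0.
have x0 : 0 < `|c ord_max| * D by rewrite mulr_gt0.
nra.
Qed.

Lemma dotv_self_gt0 (R : realType) (d : nat) (u : 'rV[R]_d) : u != 0 -> 0 < dotv u u.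
Proof.
move=> nz; rewrite lt_def; apply/andP; split; last first.
  by apply: sumr_ge0 => k _; rewrite -expr2 sqr_ge0.
apply/eqP => h; move/negP: nz; apply; apply/eqP/rowP => k; rewrite mxE.
have hp : forall j, predT j -> 0 <= u 0 j * u 0 j.
  by move=> j _; rewrite -expr2 sqr_ge0.
have hk := @psumr_eq0P _ _ predT (fun k => u 0 k * u 0 k) hp h k isT.
by move/eqP: hk; rewrite mulf_eq0 orbb => /eqP.
Qed.

Lemma on_mc (R : realType) (d : nat) (u : 'rV[R]_d) (b s : R) :
  on_hyperplane u b (moment_curve d s) -> \sum_k u 0 k * s ^+ k.+1 = b.
Proof.
rewrite /on_hyperplane /dotv /moment_curve => <-.
by apply: eq_bigr => k _; rewrite mxE.
Qed.

Theorem lemma2p2 (R : realType) (d : nat) (hd : (2 <= d)%N) :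
  exists M : R, 0 < M /\
    forall (n : 'I_d -> 'rV[R]_d) (b : 'I_d -> R),
      (forall i, n i != 0) ->
      (forall i j, i != j -> dotv (n i) (n j) = 0) ->
      exists i : 'I_d, forall s t : R, M <= s -> M <= t ->
        on_hyperplane (n i) (b i) (moment_curve d s) ->
        on_hyperplane (n i) (b i) (moment_curve d t) ->
        moment_curve d s = moment_curve d t.
Proof.
case: d hd => [|d'] // _.
set N : R := d'.+1%:R.
have N1 : 1 <= N by rewrite /N ler1n.
exists (N * N + 1); split; first by nra.
move=> n b nz orth.
set q := fun i => dotv (n i) (n i).
have q0 : forall i, 0 < q i by move=> i; apply: dotv_self_gt0.
set l : 'I_d'.+1 := ord_max.
have [i hi] : exists i, q i <= N * (n i 0 l * n i 0 l).
  case/boolP: [exists i, q i <= N * (n i 0 l * n i 0 l)] => [/existsP//|/existsPn H]; exfalso.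
  set A : 'M[R]_d'.+1 := \matrix_(i, k) n i 0 k.
  set B : 'M[R]_d'.+1 := \matrix_(k, j) (n j 0 k / q j).
  have AB : A *m B = 1%:M.
    apply/matrixP => i j; rewrite !mxE.
    under eq_bigr do rewrite !mxE.
    rewrite (eq_bigr (fun k => (n i 0 k * n j 0 k) / q j)); last by move=> k _; rewrite mulrA.
    rewrite -mulr_suml -/(dotv (n i) (n j)).
    case: (eqVneq i j) => [<-|ij]; first by rewrite ?eqxx divff // (gt_eqF (q0 i)).
    by rewrite orth // mul0r.
  have := mulmx1C AB => /matrixP /(_ l l); rewrite !mxE eqxx /=.
  under eq_bigr do rewrite !mxE.
  move=> S1.
  have : \sum_j N * (n j 0 l / q j * n j 0 l) < \sum_(j < d'.+1) 1.
    apply: ltr_sum; first by apply/hasP; exists l; rewrite ?mem_index_enum.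
    move=> j _; have := H j; rewrite -ltNge => hj.
    have -> : N * (n j 0 l / q j * n j 0 l) = (N * (n j 0 l * n j 0 l)) / q j by ring.
    by rewrite ltr_pdivrMr // mul1r.
  by rewrite -mulr_sumr S1 mulr1 sumr_const card_ord ltxx.
exists i => s t Ms Mt hs ht.
have c0 : n i 0 l != 0.
  apply/eqP => c0; move: hi; rewrite c0 mul0r mulr0; have := q0 i; lra.
have cb : forall k, `|n i 0 k| <= N * `|n i 0 l|.
  move=> k.
  have hk : n i 0 k * n i 0 k <= q i.
    rewrite /q /dotv (bigD1 k) //= lerDl.
    by apply: sumr_ge0 => j _; rewrite -expr2 sqr_ge0.
  have e1 : `|n i 0 k| ^+ 2 = n i 0 k * n i 0 k by rewrite real_normK ?num_real // expr2.
  have e2 : `|n i 0 l| ^+ 2 = n i 0 l * n i 0 l by rewrite real_normK ?num_real // expr2.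
  have := normr_ge0 (n i 0 k); have := normr_ge0 (n i 0 l).
  rewrite !expr2 in e1 e2.
  move=> hc hx.
  have cc : 0 <= n i 0 l * n i 0 l by rewrite -expr2 sqr_ge0.
  have h1 : N * (n i 0 l * n i 0 l) <= N * N * (n i 0 l * n i 0 l) by nra.
  have h2 : `|n i 0 k| * `|n i 0 k| <= (N * `|n i 0 l|) * (N * `|n i 0 l|) by nra.
  have hb : 0 <= N * `|n i 0 l| by apply: mulr_ge0 => //; lra.
  move: h2 hb hx; set a := `|n i 0 k|; set bb := N * `|n i 0 l|; move=> h2 hb hx.
  nra.
have Es := @on_mc _ _ _ _ _ hs; have Et := @on_mc _ _ _ _ _ ht.
have hst : s = t.
  case: (ltgtP s t) => // st.
    by move: (@core _ _ _ _ _ c0 cb Ms st); rewrite Es Et eqxx.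
  by move: (@core _ _ _ _ _ c0 cb Mt st); rewrite Es Et eqxx.
by rewrite hst.
Qed.
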